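(* Let $G$ be a finite simple graph and let $\mathcal{P}'\subset\mathcal{P}$ be sets of vertices of $G$, with no two vertices of $\mathcal{P}$ adjacent, $|\mathcal{P}'|=m_0$ and $|\mathcal{P}|=m_0+m$ ($m_0,m\ge0$ integers). If the pinned graph $(G,\mathcal{P}')$ is $k$-admissible, then the pinned graph $(G,\mathcal{P})$ is $(k+m)$-admissible.
   Context: For a pinned graph $(G,\mathcal{Q})$ with $G=(\mathcal{V},\mathcal{E})$ and $q=|\mathcal{Q}|$, a construction order is an ordering $v_1,\dots,v_l$ of $\mathcal{V}$ whose first $q$ entries are exactly the vertices of $\mathcal{Q}$; for $i>q$ the back-degree of $v_i$ is the number of vertices among $v_1,\dots,v_{i-1}$ adjacent to $v_i$. $(G,\mathcal{Q})$ is $k$-admissible if some construction order has all back-degrees (for $i>q$) at most $k$. *)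

(* Defs.v *)
From mathcomp Require Import all_boot all_order.
Set Implicit Arguments. Unset Strict Implicit. Unset Printing Implicit Defensive.

Definition simple_graph (T : finType) (e : rel T) : Prop :=
  symmetric e /\ irreflexive e.

Definition construction_order (T : finType) (Q : {set T}) (s : seq T) : Prop :=
  [/\ uniq s, (forall v : T, v \in s) & [set x in take #|Q| s] = Q].

Definition back_degree (T : finType) (e : rel T) (s : seq T) (i : nat) (x0 : T) : nat :=
  count (fun u => e u (nth x0 s i)) (take i s).

Definition admissible (T : finType) (e : rel T) (Q : {set T}) (k : nat) : Prop :=
  exists s : seq T, construction_order Q s /\
    forall (i : nat) (x0 : T), #|Q| <= i < size s -> back_degree e s i x0 <= k.

(* Main.v *)
Require Import Defs.
From mathcomp Require Import all_boot all_order.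

Lemma count_set (T : finType) (A : {set T}) (s : seq T) :
  uniq s -> (forall v, v \in s) -> count (fun x => x \in A) s = #|A|.
Proof.
move=> us alls; rewrite -size_filter.
have /card_uniqP <- : uniq [seq x <- s | x \in A] by exact: filter_uniq.
by apply: eq_card => x; rewrite mem_filter alls andbT.
Qed.

Lemma split_count (T : Type) (p a : pred T) (t : seq T) :
  count a t = count (predI a p) t + count (predI a (predC p)) t.
Proof.
elim: t => //= x t ->; case: (a x); case: (p x) => /=; rewrite ?add0n ?addnA ?addn1 ?addSn //.
Qed.

Theorem proposition4p5 (T : finType) (e : rel T) (P' P : {set T}) (m0 m k : nat) :
  simple_graph e ->
  P' \subset P ->
  (forall u v, u \in P -> v \in P -> ~~ e u v) ->
  #|P'| = m0 -> #|P| = m0 + m ->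
  admissible e P' k ->
  admissible e P (k + m).
Proof.
move=> _ sPP' _ cP' cP [s [[us alls tP'] adm]].
set A := [seq x <- s | x \in P].
set B := [seq x <- s | x \notin P].
have sA : size A = #|P| by rewrite size_filter count_set.
have sAB : size (A ++ B) = size s.
  by rewrite size_cat !size_filter (count_predC (fun x => x \in P)).
exists (A ++ B); split.
  split.
  - rewrite cat_uniq !filter_uniq // andbT /=; apply/hasPn => x.
    by rewrite !mem_filter => /andP[/negbTE -> _].
  - by move=> v; rewrite mem_cat !mem_filter alls !andbT; case: (v \in P).
  - by rewrite take_size_cat //; apply/setP => x; rewrite inE mem_filter alls andbT.
move=> i x0 /andP[Hi Hi']; rewrite /back_degree.
set j := i - #|P|.
have ij : i = size A + j by rewrite sA /j subnKC.
have jB : j < size B by rewrite ij sAB -sAB size_cat ltn_add2l in Hi' *.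
rewrite ij nth_cat ltnNge leq_addr /= addKn.
set v := nth x0 B j.
have vB : v \in B by exact: mem_nth.
move: (vB); rewrite mem_filter => /andP[vP vs].
set i0 := index v s.
have i0s : i0 < size s by rewrite index_mem.
have nv : nth x0 s i0 = v by exact: nth_index.
have es : s = take i0 s ++ v :: drop i0.+1 s by rewrite -nv -drop_nth // cat_take_drop.
have vt : v \notin take i0 s.
  by move: us; rewrite {1}es cat_uniq => /and3P[_ /hasPn/(_ v) H _]; apply: H; rewrite mem_head.
have BE : B = [seq x <- take i0 s | x \notin P] ++ v :: [seq x <- drop i0.+1 s | x \notin P].
  by rewrite /B {1}es filter_cat /= vP.
have jeq : j = size [seq x <- take i0 s | x \notin P].
  have : index v B = j by rewrite index_uniq // filter_uniq.
  rewrite BE index_cat mem_filter (negbTE vt) andbF /=.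
  by rewrite eqxx addn0 => <-.
have -> : take (size A + j) (A ++ B) = A ++ [seq x <- take i0 s | x \notin P].
  rewrite take_cat ltnNge leq_addr /= addKn; congr (_ ++ _).
  by rewrite jeq BE take_size_cat.
have m0i0 : m0 <= i0.
  rewrite leqNgt; apply/negP => lt.
  have : v \in take m0 s by rewrite -nv -(nth_take x0 lt) mem_nth // size_take; case: ifP => // /negbT; rewrite -leqNgt => /(leq_trans lt).
  rewrite -cP' -[_ \in _](in_set (fun x => x \in take #|P'| s)) tP' => vP'.
  by move: vP; rewrite (subsetP sPP') .
have := adm i0 x0; rewrite cP' m0i0 i0s => /(_ isT); rewrite /back_degree nv.
set a := (fun u => e u v).
move=> Hk.
rewrite count_cat count_filter /A count_filter.
rewrite -[s in count _ s](cat_take_drop i0) count_cat.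
have Hd : count (predI a (fun x => x \in P)) (drop i0 s) <= m.
  have Hm : count (fun x => x \in P :\: P') s = m.
    by rewrite count_set // cardsD (setIidPr sPP') cP cP' addKn.
  have Es : forall q, count q s = count q (take i0 s) + count q (drop i0 s).
    by move=> q; rewrite -count_cat cat_take_drop.
  rewrite -Hm Es.
  apply: leq_trans (leq_addl _ _).
  rewrite (@eq_in_count _ _ (predI (predI a (fun x => x \in P)) (fun x => x \in P :\: P'))).
    by apply: sub_count => x /andP[_ ->].
  move=> x xd /=; rewrite inE.
  have -> : (x \in P') = false.
    apply/negP => xP'.
    have : x \in take i0 s.
      apply: (mem_take (n0 := m0)).
      by rewrite take_takel // -cP' -[_ \in _](in_set (fun x => x \in take #|P'| s)) tP'.
    move: us; rewrite -[s in uniq s](cat_take_drop i0) cat_uniq => /and3P[_ /hasPn H _].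
    by move=> xt; move: (H x xd); rewrite xt.
  by case: (a x); case: (x \in P).
rewrite (split_count _ (fun x => x \in P) a) in Hk.
rewrite -addnA (addnC (count _ (drop i0 s))) addnA.
apply: leq_add Hd; apply: leq_trans Hk; rewrite leq_add2l.
by apply: sub_count => x.
Qed.
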